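(* Let $p$ be a prime, $d\ge1$ an integer and $G\cong\mathbb{Z}_p^d$. Then for every non-empty subset $A$ of $]p-1[=\{1,\dots,p-1\}$, \[ d_A(G)\le\left\lceil\frac{d(p-1)+1}{|A|}\right\rceil . \]
   Context: For an integer $x\ge1$, $]x[=\{1,2,\dots,x\}$. Let $G$ be a finite abelian group (written additively) of exponent $n$ and let $\emptyset\ne A\subseteq\, ]n[$. The constant $d_A(G)$ is the least positive integer $t$ such that for every sequence $g_1,\dots,g_t$ of (not necessarily distinct) elements of $G$ there exist $\ell\ge1$, indices $1\le i_1<\dots<i_\ell\le t$ and elements $a_1,\dots,a_\ell\in A$ (repetitions allowed) with $\sum_{j=1}^{\ell}a_j g_{i_j}=0$ in $G$. $\lceil x\rceil$ denotes the smallest integer $\ge x$. *)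

(* Defs.v *)
From HB Require Import structures.
From mathcomp Require Import all_boot all_algebra.
From mathcomp Require Import boolp.
Set Implicit Arguments. Unset Strict Implicit. Unset Printing Implicit Defensive.
Import GRing.Theory.
Local Open Scope ring_scope.

Definition has_A_zero_sum (G : zmodType) (m : nat) (A : {set 'I_m})
  (t : nat) (g : t.-tuple G) : Prop :=
  exists I : {set 'I_t}, I != set0 /\
    exists a : 'I_t -> 'I_m, (forall i, i \in I -> a i \in A) /\
      \sum_(i in I) (tnth g i) *+ (val (a i)) = 0.

Definition dA_prop (G : zmodType) (m : nat) (A : {set 'I_m}) (t : nat) : Prop :=
  forall g : t.-tuple G, has_A_zero_sum A g.

Definition dA_pred (G : zmodType) (m : nat) (A : {set 'I_m}) : pred nat :=
  fun t => (0 < t)%N && `[< dA_prop G A t >].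

(* d_A(G): least positive t with dA_prop (0 if no such t exists, which
   never happens for finite G and nonempty A). *)
Definition dA (G : zmodType) (m : nat) (A : {set 'I_m}) : nat :=
  match pselect (exists t, dA_pred G A t) with
  | left H => ex_minn H
  | right _ => 0%N
  end.

(* Main.v *)
Require Import Defs.
From mathcomp Require Import all_boot all_algebra.
From mathcomp Require Import all_field.
From mathcomp Require Import mpoly zify boolp.
Set Implicit Arguments. Unset Strict Implicit. Unset Printing Implicit Defensive.
Import GRing.Theory.

Module Aux.
Local Open Scope ring_scope.
Section Interp.
Variable F : fieldType.

Lemma prod_excl_size (r : seq F) (v : F) : v \in r -> uniq r ->
  size (\prod_(u <- r | u != v) ('X - u%:P)) = size r.
Proof.
move=> vr ur; rewrite -big_filter size_prod_XsubC size_filter.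
have := count_predC (pred1 v) r; rewrite count_uniq_mem // vr.
have -> : count (predC (pred1 v)) r = count (fun u => u != v) r by apply: eq_count.
by move=> <-; rewrite add1n.
Qed.

Lemma interp_sum (r : seq F) (e : nat) : uniq r -> (e < (size r).-1)%N ->
  \sum_(v <- r) v ^+ e * (\prod_(u <- r | u != v) (v - u))^-1 = 0.
Proof.
move=> ur he.
set c := fun v => (\prod_(u <- r | u != v) (v - u))^-1.
pose q := \sum_(v <- r) (v ^+ e * c v) *: \prod_(u <- r | u != v) ('X - u%:P).
have nr : (0 < size r)%N by case: (size r) he.
have qsz : (size q <= size r)%N.
  rewrite /q big_seq; apply: (big_ind (fun q : {poly F} => (size q <= size r)%N)).
  - by rewrite size_poly0.
  - by move=> x y hx hy; apply: (leq_trans (size_polyD _ _)); rewrite geq_max hx hy.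
  move=> v vr; apply: (leq_trans (size_scale_leq _ _)).
  by rewrite prod_excl_size.
have cnz : forall z, z \in r -> \prod_(u <- r | u != z) (z - u) != 0.
  move=> z zr; rewrite prodf_seq_neq0; apply/allP=> u _; apply/implyP.
  by rewrite subr_eq0 eq_sym.
have qz : forall z, z \in r -> q.[z] = z ^+ e.
  move=> z zr; rewrite /q horner_sum (bigD1_seq z) //= [X in _ + X]big1_seq ?addr0.
    rewrite hornerZ horner_prod.
    under eq_bigr do rewrite hornerXsubC.
    by rewrite /c -mulrA mulVf ?mulr1 // cnz.
  move=> v /andP[vz _]; rewrite hornerZ horner_prod.
  under eq_bigr do rewrite hornerXsubC.
  have zf : z \in [seq u <- r | u != v] by rewrite mem_filter eq_sym vz zr.
  by rewrite -big_filter (bigD1_seq z) //= ?filter_uniq // subrr mul0r mulr0.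
have qe : q = 'X^e.
  apply/eqP; rewrite -subr_eq0; apply/negPn/negP => nz.
  have := max_poly_roots nz _ ur.
  have -> : all (root (q - 'X^e)) r.
    by apply/allP=> z zr; rewrite /root hornerD hornerN hornerXn qz // subrr.
  move=> /(_ isT) hlt; have := leq_trans hlt (size_polyD _ _).
  rewrite size_polyN size_polyXn leq_max ltnNge qsz /= => h2.
  by move: he h2; case: (size r) => //= n; lia.
have h0 : q`_(size r).-1 = 0.
  rewrite qe coefXn.
  have -> : ((size r).-1 == e) = false by apply/negbTE; rewrite neq_ltn he orbT.
  by rewrite mulr0n.
have h1 : q`_(size r).-1 = \sum_(v <- r) v ^+ e * c v.
  rewrite /q coef_sum; apply: eq_big_seq => v vr; rewrite coefZ.
  have /monicP := monic_prod_XsubC r (fun u => u != v) id.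
  by rewrite lead_coefE prod_excl_size // => ->; rewrite mulr1.
by rewrite -[RHS]h0 h1.
Qed.
End Interp.

Section Grid.
Variable F : finFieldType.
Variable r : seq F.
Hypothesis ur : uniq r.
Definition wt (v : F) : F :=
  if v \in r then (\prod_(u <- r | u != v) (v - u))^-1 else 0.

Lemma sum_wt e : (e < (size r).-1)%N -> \sum_(v : F) wt v * v ^+ e = 0.
Proof.
move=> he; rewrite -[RHS](interp_sum ur he) (big_uniq _ ur) [RHS]big_mkcond /=.
apply: eq_bigr => v _; rewrite /wt; case: (v \in r); last by rewrite mul0r.
by rewrite mulrC.
Qed.

Variable t : nat.

Lemma Lmono (m : 'X_{1..t}) : (mdeg m < t * (size r).-1)%N ->
  \sum_(x : {ffun 'I_t -> F}) (\prod_i wt (x i)) * \prod_i x i ^+ m i = 0.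
Proof.
move=> hm.
have [i hi] : exists i, (m i < (size r).-1)%N.
  case: (boolP [exists i, (m i < (size r).-1)%N]) => [/existsP //|].
  rewrite negb_exists => /forallP hall.
  have h : (\sum_(j < t) (size r).-1 <= \sum_(j < t) m j)%N.
    by apply: leq_sum => j _; rewrite leqNgt hall.
  rewrite sum_nat_const card_ord -mdegE in h.
  by move: hm; rewrite ltnNge h.
under eq_bigr do rewrite -big_split /=.
rewrite -(bigA_distr_bigA (fun i v => wt v * v ^+ m i)) /=.
by rewrite (bigD1 i) //= sum_wt // mul0r.
Qed.

Lemma Lpoly (P : {mpoly F[t]}) : (msize P <= t * (size r).-1)%N ->
  \sum_(x : {ffun 'I_t -> F}) (\prod_i wt (x i)) * P.@[x] = 0.
Proof.
move=> hP.
under eq_bigr do rewrite mevalE mulr_sumr.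
rewrite exchange_big /= big_seq big1 // => m mP.
under eq_bigr do rewrite mulrCA.
rewrite -mulr_sumr Lmono ?mulr0 //.
exact: leq_trans (msize_mdeg_lt mP) hP.
Qed.
End Grid.

Section Deg.
Variable F : fieldType.
Variable t : nat.
Implicit Types (p q : {mpoly F[t]}).

Lemma msizeM_le' p q : (msize (p * q) <= (msize p + msize q).-1)%N.
Proof.
have [->|p0] := eqVneq p 0; first by rewrite mul0r msize0.
have [->|q0] := eqVneq q 0; first by rewrite mulr0 msize0.
by rewrite msizeM.
Qed.

Lemma msize_ell (c : 'I_t -> F) : (msize (\sum_(i < t) c i *: 'X_i) <= 2)%N.
Proof.
apply: (big_ind (fun q : {mpoly F[t]} => (msize q <= 2)%N)).
- by rewrite msize0.
- by move=> x y hx hy; apply: (leq_trans (msizeD_le _ _)); rewrite geq_max hx hy.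
move=> i _; apply: (leq_trans (msizeZ_le _ _)).
by rewrite msizeX mdeg1.
Qed.

Lemma msize_exp q k : (msize q <= 2)%N -> (msize (q ^+ k) <= k.+1)%N.
Proof.
move=> hq; elim: k => [|k ih]; first by rewrite expr0 msize1.
rewrite exprS; apply: (leq_trans (msizeM_le' _ _)).
by move: hq ih; lia.
Qed.

Lemma msize_prod (I : Type) (s : seq I) (G : I -> {mpoly F[t]}) k :
  (forall i, msize (G i) <= k.+1)%N -> (msize (\prod_(i <- s) G i) <= size s * k + 1)%N.
Proof.
move=> hG; elim: s => [|i s ih]; first by rewrite big_nil msize1.
rewrite big_cons; apply: (leq_trans (msizeM_le' _ _)).
by move: (hG i) ih => /=; lia.
Qed.
Lemma msize_prod_ord (d : nat) (G : 'I_d -> {mpoly F[t]}) k :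
  (forall i, msize (G i) <= k.+1)%N -> (msize (\prod_(i < d) G i) <= d * k + 1)%N.
Proof.
elim: d G => [|d ih] G hG; first by rewrite big_ord0 msize1.
rewrite big_ord_recr /=; apply: (leq_trans (msizeM_le' _ _)).
have := ih (fun i => G (widen_ord (leqnSn d) i)) (fun i => hG _).
have key : forall a b, (b <= k.+1 -> a <= d * k + 1 -> (a + b).-1 <= d.+1 * k + 1)%N.
  by move=> a b; nia.
by move=> h2; apply: key h2; apply: hG.
Qed.
End Deg.

Section Main.
Variables (p d t : nat) (A : {set 'I_p}).
Hypothesis pp : prime p.
Hypothesis hA0 : forall a, a \in A -> (0 < val a)%N.

Definition rA : seq 'F_p := 0 :: [seq (val a)%:R | a <- enum A].

Lemma rA_uniq : uniq rA.
Proof.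
rewrite /rA /= map_inj_in_uniq ?enum_uniq ?andbT.
- apply/mapP => -[a]; rewrite mem_enum => aA e.
  have := val_Fp_nat pp a; rewrite -e modn_small // => a0.
  by move: (hA0 aA); rewrite -[\val a]/(nat_of_ord a) -a0.
move=> a b _ _ e; have := val_Fp_nat pp a; rewrite e val_Fp_nat // !modn_small // => ab.
exact: val_inj.
Qed.

Lemma rA_size : size rA = #|A|.+1.
Proof. by rewrite /= size_map cardE. Qed.

Lemma fermat (v : 'F_p) : v != 0 -> v ^+ (p - 1) = 1.
Proof.
move=> v0; have := expf_card v; rewrite card_Fp // => hv.
by apply: (mulIf v0); rewrite -exprSr subn1 prednK ?prime_gt0 // hv mul1r.
Qed.

Lemma main (g : t.-tuple 'rV['F_p]_d) : (d * (p - 1) < t * #|A|)%N ->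
  has_A_zero_sum A g.
Proof.
move=> hdeg.
case: (pselect (has_A_zero_sum A g)) => // nzs; exfalso.
pose ell (j : 'I_d) : {mpoly 'F_p[t]} := \sum_(i < t) (tnth g i 0 j) *: 'X_i.
pose P := \prod_(j < d) (1 - ell j ^+ (p - 1)).
have hP : (msize P <= t * (size rA).-1)%N.
  rewrite rA_size /=; apply: leq_trans (msize_prod_ord (k := (p - 1)%N) _) _.
  - move=> j; apply: (leq_trans (msizeD_le _ _)); rewrite msizeN msize1 geq_max.
    apply/andP; split; first by lia.
    by apply: leq_trans (msize_exp _ (msize_ell _)) _.
  - by rewrite addn1.
have L0 := Lpoly rA_uniq hP.
pose W (x : {ffun 'I_t -> 'F_p}) := \prod_i wt rA (x i).
have evalP : forall x : {ffun 'I_t -> 'F_p}, P.@[x] =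
    \prod_(j < d) (1 - (\sum_(i < t) tnth g i 0 j * x i) ^+ (p - 1)).
  move=> x; rewrite /P rmorph_prod; apply: eq_bigr => j _.
  rewrite rmorphB rmorph1 rmorphXn /ell raddf_sum; congr (1 - _ ^+ _).
  by apply: eq_bigr => i _; rewrite /= mevalZ mevalXU.
pose x0 : {ffun 'I_t -> 'F_p} := [ffun => 0].
have wt0 : wt rA 0 != 0.
  rewrite /wt mem_head invr_eq0 prodf_seq_neq0; apply/allP=> u _; apply/implyP.
  by rewrite sub0r oppr_eq0 eq_sym.
have other : forall x, x != x0 -> W x * P.@[x] = 0.
  move=> x xn0.
  case: (boolP (W x == 0)) => [/eqP->|Wn0]; first by rewrite mul0r.
  have xr : forall i, x i \in rA.
    move=> i; apply/negPn/negP => xi; move: Wn0.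
    by rewrite /W (bigD1 i) //= /wt (negbTE xi) mul0r eqxx.
  have [i xi] : exists i, x i != 0.
    case: (boolP [exists i, x i != 0]) => [/existsP //|].
    rewrite negb_exists => /forallP h0; move: xn0.
    have -> : x = x0 by apply/ffunP => i; rewrite ffunE; apply/eqP; move: (h0 i); rewrite negbK.
    by rewrite eqxx.
  pose vec := \sum_(i < t) x i *: tnth g i.
  have vec0 : vec != 0.
    apply/negP => /eqP v0; apply: nzs.
    pose a0 : 'I_p := Ordinal (prime_gt0 pp).
    exists [set i | x i != 0]; split.
      by apply/set0Pn; exists i; rewrite inE.
    pose af := fun i => odflt a0 [pick a in A | (val a)%:R == x i].
    have hpick : forall k, x k != 0 -> af k \in A /\ (val (af k))%:R = x k.
      move=> k xk; rewrite /af; case: pickP => [a /andP[aA /eqP ea] | none] /=; first by [].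
      exfalso; move: (xr k); rewrite /rA inE (negbTE xk) /= => /mapP [a].
      rewrite mem_enum => aA ea.
      by move: (none a); rewrite aA -ea eqxx.
    exists af; split; first by move=> k; rewrite inE => /hpick [].
    rewrite -[RHS]v0 /vec [RHS](bigID (fun i => x i != 0)) /= [X in _ = _ + X]big1 ?addr0.
      apply: eq_big => k; first by rewrite inE.
      by rewrite inE => xk; rewrite -scaler_nat; case: (hpick k xk) => _ ->.
    by move=> k /negPn/eqP ->; rewrite scale0r.
  have [j vj] : exists j, vec 0 j != 0.
    case: (boolP [exists j, vec 0 j != 0]) => [/existsP //|].
    rewrite negb_exists => /forallP h0; move: vec0.
    have -> : vec = 0 by apply/rowP => j; rewrite mxE; apply/eqP; move: (h0 j); rewrite negbK.
    by rewrite eqxx.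
  rewrite evalP (bigD1 j) //=.
  have -> : \sum_(i < t) tnth g i 0 j * x i = vec 0 j.
    by rewrite /vec summxE; apply: eq_bigr => k _; rewrite mxE mulrC.
  by rewrite fermat // subrr mul0r mulr0.
have : \sum_(x : {ffun 'I_t -> 'F_p}) W x * P.@[x] = W x0.
  rewrite (bigD1 x0) //= big1 ?addr0; last by move=> x; apply: other.
  rewrite evalP big1 ?mulr1 // => j _.
  rewrite big1; last by move=> i _; rewrite ffunE mulr0.
  by rewrite expr0n subn_eq0 leqNgt prime_gt1 //= subr0.
rewrite L0 => /esym/eqP; rewrite /W.
under eq_bigr do rewrite ffunE.
by rewrite prodr_const expf_eq0 (negbTE wt0) andbF.
Qed.
End Main.

End Aux.

Theorem corollary1p1 (p d : nat) (A : {set 'I_p}) :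
  prime p -> (1 <= d)%N -> A != set0 -> (forall a, a \in A -> (0 < val a)%N) ->
  (dA 'rV['F_p]_d A <= ((d * (p - 1) + 1) + #|A| - 1) %/ #|A|)%N.
Proof.
move=> pp d1 An0 hA0.
have k0 : (0 < #|A|)%N by rewrite card_gt0.
set X := ((d * (p - 1) + 1) + #|A| - 1)%N.
set t0 := (X %/ #|A|)%N.
have ht : (d * (p - 1) < t0 * #|A|)%N.
  move: (divn_eq X #|A|) (ltn_pmod X k0); rewrite -/t0 /X.
  move: (t0 * #|A|)%N (X %% #|A|)%N => a b; lia.
have pt : dA_pred 'rV['F_p]_d A t0.
  apply/andP; split.
    by move: ht; case: t0 => //; rewrite mul0n.
  by apply/asboolP => g; apply: Aux.main.
rewrite /dA; case: pselect => [H|nH]; last by exfalso; apply: nH; exists t0.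
by case: ex_minnP => m _ hmin; apply: hmin.
Qed.
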